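(* Assume $W$ satisfies conditions (i) and (ii) below on $[0,T]$. Then for every integer $r\ge1$ there is a constant $C$ such that for all $n\ge1$ and $0\le t\le T$, $$\sum_{j,k=1}^{\lfloor nt/2\rfloor}\Big(|\beta_n(2j-1,2k-1)|^r+|\beta_n(2j-1,2k-2)|^r+|\beta_n(2j-2,2k-1)|^r+|\beta_n(2j-2,2k-2)|^r\Big)\le C\Big\lfloor\frac{nt}{2}\Big\rfloor n^{-r/2}.$$
   Context: $W=\{W_t,t\ge0\}$ is a centered Gaussian process with continuous covariance. For integers $j,k\ge0$, $n\ge1$: $\beta_n(j,k)=\mathbb E[(W_{(j+1)/n}-W_{j/n})(W_{(k+1)/n}-W_{k/n})]$. Fix $T>0$. Condition (i): there is $C_1$ such that $\mathbb E[(W_t-W_{t-s})^2]\le C_1 s^{1/2}$ for all $0<s\le t\le T$. Condition (ii): there are constants $C_1$ and $1<\alpha\le 3/2$, $\beta=\tfrac32-\alpha$, such that for all $s>0$ and $2s\le r,t\le T$ with $|t-r|\ge2s$: $|\mathbb E[(W_t-W_{t-s})(W_r-W_{r-s})]|\le C_1s^2|t-r|^{-\alpha}(t\wedge r-s)^{-\beta}+C_1s^2|t-r|^{-3/2}$. *)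

(* Defs.v *)
From Stdlib Require Export Reals.
Open Scope R_scope.

(* The centered Gaussian process W is represented through its covariance
   kernel  Cov s t = E[W_s W_t]  (all quantities in the statement only
   depend on it). *)

Fixpoint sumR (f : nat -> R) (m : nat) : R :=
  match m with O => 0 | S m' => sumR f m' + f m' end.

Definition is_covariance (Cov : R -> R -> R) : Prop :=
  (forall s t, 0 <= s -> 0 <= t -> Cov s t = Cov t s) /\
  (forall (m : nat) (ts : nat -> R) (a : nat -> R),
     (forall i, 0 <= ts i) ->
     0 <= sumR (fun i => sumR (fun j => a i * a j * Cov (ts i) (ts j)) m) m).

Definition cov_continuous (Cov : R -> R -> R) : Prop :=
  forall s t, 0 <= s -> 0 <= t ->
    forall eps, 0 < eps -> exists delta, 0 < delta /\
      forall s' t', 0 <= s' -> 0 <= t' -> Rabs (s' - s) < delta -> Rabs (t' - t) < delta ->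
        Rabs (Cov s' t' - Cov s t) < eps.

(* E[(W_a - W_b)(W_c - W_d)] *)
Definition incr_cov (Cov : R -> R -> R) (a b c d : R) : R :=
  Cov a c - Cov a d - Cov b c + Cov b d.

Definition beta_n (Cov : R -> R -> R) (n j k : nat) : R :=
  incr_cov Cov (INR (S j) / INR n) (INR j / INR n) (INR (S k) / INR n) (INR k / INR n).

Definition cond_i (Cov : R -> R -> R) (T : R) : Prop :=
  exists C1 : R, forall s t, 0 < s -> s <= t -> t <= T ->
    incr_cov Cov t (t - s) t (t - s) <= C1 * Rpower s (1/2).

Definition cond_ii (Cov : R -> R -> R) (T : R) : Prop :=
  exists C1 alpha : R, 1 < alpha /\ alpha <= 3/2 /\
    let beta := 3/2 - alpha in
    forall s r t, 0 < s -> 2 * s <= r -> r <= T -> 2 * s <= t -> t <= T ->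
      2 * s <= Rabs (t - r) ->
      Rabs (incr_cov Cov t (t - s) r (r - s)) <=
        C1 * s ^ 2 * Rpower (Rabs (t - r)) (- alpha) * Rpower (Rmin t r - s) (- beta)
        + C1 * s ^ 2 * Rpower (Rabs (t - r)) (- (3/2)).

Definition nfloor (x : R) : nat := Z.to_nat (Int_part x).

Definition sum1 (f : nat -> R) (m : nat) : R := sumR (fun i => f (S i)) m.

(* Main.v *)
Require Import Defs.
From Stdlib Require Import Reals Lra Lia ZArith.
Open Scope R_scope.

Lemma expm (x y : R) : x <= y -> exp x <= exp y.
Proof. intros [H|H]; [left; apply exp_increasing; exact H | subst; lra]. Qed.

Lemma lnm (x y : R) : 0 < x -> x <= y -> ln x <= ln y.
Proof. intros Hx [H|H]; [left; apply ln_increasing; lra | subst; lra]. Qed.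

Lemma lndiv (x y : R) : 0 < x -> 0 < y -> ln (x / y) = ln x - ln y.
Proof. intros. unfold Rdiv. rewrite ln_mult, ln_Rinv; try lra. apply Rinv_0_lt_compat; lra. Qed.

Lemma ln_le_xm1 (x : R) : 0 < x -> ln x <= x - 1.
Proof. intros Hx. pose proof (exp_ineq1_le (ln x)). rewrite exp_ln in H; lra. Qed.

Lemma ln_nonneg (x : R) : 1 <= x -> 0 <= ln x.
Proof. intros. rewrite <- ln_1. apply lnm; lra. Qed.

Lemma exp_INR_mul (r : nat) (x : R) : exp (INR r * x) = exp x ^ r.
Proof.
  induction r as [|r IH]. simpl. rewrite Rmult_0_l, exp_0; lra.
  rewrite S_INR, Rmult_plus_distr_r, Rmult_1_l, exp_plus, IH. simpl. ring.
Qed.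

Lemma telesc (x g : R) : 1 <= x -> 0 < g ->
  Rpower (x+1) (-(g+1)) <= (Rpower x (-g) - Rpower (x+1) (-g)) / g.
Proof.
  intros Hx Hg. unfold Rpower.
  set (L1 := ln x). set (L2 := ln (x+1)).
  assert (HL : 1/(x+1) <= L2 - L1).
  { unfold L1, L2. pose proof (ln_le_xm1 (x/(x+1))).
    rewrite lndiv in H by lra.
    assert (x/(x+1) - 1 = - (1/(x+1))) by (field; lra). assert (0 < x/(x+1)) by (apply Rdiv_lt_0_compat; lra). lra. }
  assert (E1 : exp (-(g+1) * L2) = exp (-g*L2) * / (x+1)).
  { replace (-(g+1)*L2) with (-g*L2 + - L2) by ring. rewrite exp_plus, exp_Ropp.
    unfold L2. rewrite exp_ln by lra. reflexivity. }
  assert (E2 : exp (-g*L1) = exp (-g*L2) * exp (g*(L2 - L1))).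
  { rewrite <- exp_plus. f_equal. ring. }
  pose proof (exp_ineq1_le (g*(L2-L1))).
  pose proof (exp_pos (-g*L2)).
  rewrite E1, E2.
  assert (g * (1/(x+1)) <= g*(L2-L1)) by (apply Rmult_le_compat_l; lra).
  assert (exp (- g * L2) * (1 + g * (1/(x+1))) <= exp (- g * L2) * exp (g * (L2 - L1))).
  { apply Rmult_le_compat_l; lra. }
  apply Rle_trans with ((exp (- g * L2) * (1 + g * (1/(x+1))) - exp (-g*L2))/g).
  { right. field. lra. }
  unfold Rdiv. apply Rmult_le_compat_r. left; apply Rinv_0_lt_compat; lra. lra.
Qed.

Lemma sumR_le (f g : nat -> R) m : (forall i, (i < m)%nat -> f i <= g i) -> sumR f m <= sumR g m.
Proof. induction m; simpl; intros H. lra. assert (f m <= g m) by (apply H; lia).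
  assert (sumR f m <= sumR g m) by (apply IHm; intros; apply H; lia). lra. Qed.

Lemma sumR_ext (f g : nat -> R) m : (forall i, (i < m)%nat -> f i = g i) -> sumR f m = sumR g m.
Proof. induction m; simpl; intros H. lra. rewrite (H m) by lia. rewrite IHm. lra. intros; apply H; lia. Qed.

Lemma sumR_plus (f g : nat -> R) m : sumR (fun i => f i + g i) m = sumR f m + sumR g m.
Proof. induction m; simpl. lra. rewrite IHm. lra. Qed.

Lemma sumR_scal (c : R) (f : nat -> R) m : sumR (fun i => c * f i) m = c * sumR f m.
Proof. induction m; simpl. lra. rewrite IHm. lra. Qed.

Lemma sumR_const (c : R) m : sumR (fun _ => c) m = INR m * c.
Proof. induction m; simpl sumR. simpl. lra. rewrite IHm, S_INR. lra. Qed.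

Lemma sumR_nonneg (f : nat -> R) m : (forall i, (i < m)%nat -> 0 <= f i) -> 0 <= sumR f m.
Proof. intros H. apply Rle_trans with (sumR (fun _ => 0) m).
  rewrite sumR_const; lra. apply sumR_le; auto. Qed.

Lemma sumR_front (f : nat -> R) m : sumR f (S m) = f O + sumR (fun i => f (S i)) m.
Proof. induction m; simpl in *. lra. rewrite IHm. lra. Qed.

Lemma sumR_rev (g : nat -> R) m : sumR (fun i => g (m - 1 - i)%nat) m = sumR g m.
Proof.
  revert g; induction m; intros g. reflexivity.
  simpl sumR at 1. replace (S m - 1 - m)%nat with O by lia.
  rewrite (sumR_ext _ (fun i => g (S (m - 1 - i)))).
  2:{ intros i Hi. f_equal. lia. }
  rewrite (IHm (fun i => g (S i))). rewrite sumR_front. replace (m - 0 - m)%nat with O by lia. lra.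
Qed.

Definition ndist (a b : nat) : nat := ((a - b) + (b - a))%nat.

Lemma dsum_dist (F : nat -> R) (K : R) m :
  (forall e, 0 <= F e) -> (forall N, sumR (fun e => F (S e)) N <= K) ->
  sumR (fun i => sumR (fun i' => F (ndist i i')) m) m <= INR m * (2*K + F O).
Proof.
  intros H0 HK. induction m. simpl. lra.
  simpl sumR at 1. rewrite sumR_plus.
  assert (A : sumR (fun i => F (ndist i m)) m <= K).
  { apply Rle_trans with (sumR (fun e => F (S e)) m); [right | apply HK].
    rewrite <- (sumR_rev (fun e => F (S e))). apply sumR_ext. intros i Hi. f_equal. unfold ndist. lia. }
  assert (B : sumR (fun i' => F (ndist m i')) m <= K).
  { apply Rle_trans with (sumR (fun e => F (S e)) m); [right | apply HK].
    rewrite <- (sumR_rev (fun e => F (S e))). apply sumR_ext. intros i Hi. f_equal. unfold ndist. lia. }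
  replace (ndist m m) with O by (unfold ndist; lia).
  rewrite S_INR. lra.
Qed.

Definition phi (al x : R) : R := Rpower x (-al) + Rpower x (-(3/2)).
Definition FF (B C al : R) (e : nat) : R := if Nat.leb e 1 then B else C * phi al (INR e).

Lemma Rpower_pos x y : 0 < Rpower x y.
Proof. unfold Rpower; apply exp_pos. Qed.

Lemma FF_nonneg B C al e : 0 <= B -> 0 <= C -> 0 <= FF B C al e.
Proof. intros. unfold FF, phi. destruct (Nat.leb e 1). lra.
  pose proof (Rpower_pos (INR e) (-al)). pose proof (Rpower_pos (INR e) (-(3/2))). nra. Qed.

Lemma FF_sum_aux B C al N : 0 <= B -> 0 <= C -> 1 < al -> (1 <= N)%nat ->
  sumR (fun e => FF B C al (S e)) N <= B + C*((1 - Rpower (INR N) (-(al-1)))/(al-1)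
     + (1 - Rpower (INR N) (-(1/2)))/(1/2)).
Proof.
  intros HB HC Hal HN. induction N as [|N IH]. lia.
  destruct N as [|N].
  - simpl. unfold FF. simpl. unfold Rpower. rewrite ln_1, !Rmult_0_r, exp_0.
    replace ((1-1)/(al-1)) with 0 by (field; lra). lra.
  - simpl sumR. simpl sumR in IH. specialize (IH ltac:(lia)).
    assert (Hx : 1 <= INR (S N)) by (rewrite S_INR; pose proof (pos_INR N); lra).
    assert (E : INR (S (S N)) = INR (S N) + 1) by (rewrite (S_INR (S N)); ring).
    unfold FF at 3. simpl Nat.leb. cbv iota. unfold phi. rewrite E.
    pose proof (telesc (INR (S N)) (al-1) Hx ltac:(lra)) as T1.
    pose proof (telesc (INR (S N)) (1/2) Hx ltac:(lra)) as T2.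
    replace (-(al - 1 + 1)) with (-al) in T1 by ring.
    replace (-(1/2 + 1)) with (-(3/2)) in T2 by field.
    assert (C * (Rpower (INR (S N) + 1) (- al) + Rpower (INR (S N) + 1) (- (3 / 2))) <=
       C * ((Rpower (INR (S N)) (- (al-1)) - Rpower (INR (S N) + 1) (- (al-1))) / (al-1)
          + (Rpower (INR (S N)) (- (1/2)) - Rpower (INR (S N) + 1) (- (1/2))) / (1/2))).
    { apply Rmult_le_compat_l; lra. }
    assert (EE : forall a b d : R, (1 - a)/d + (a - b)/d = (1 - b)/d) by (intros; unfold Rdiv; ring).
    rewrite <- E in *. 
    match goal with |- ?L <= ?R => apply Rle_trans with
      (B + C * ((1 - Rpower (INR (S N)) (- (al - 1))) / (al - 1) + (1 - Rpower (INR (S N)) (- (1 / 2))) / (1 / 2))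
       + C * ((Rpower (INR (S N)) (- (al-1)) - Rpower (INR (S (S N))) (- (al-1))) / (al-1)
          + (Rpower (INR (S N)) (- (1/2)) - Rpower (INR (S (S N))) (- (1/2))) / (1/2))) end.
    + lra.
    + right. unfold Rdiv. ring.
Qed.

Lemma FF_sum B C al N : 0 <= B -> 0 <= C -> 1 < al ->
  sumR (fun e => FF B C al (S e)) N <= B + C*(1/(al-1) + 2).
Proof.
  intros HB HC Hal. destruct N as [|N].
  - simpl. assert (0 < 1/(al-1)) by (apply Rdiv_lt_0_compat; lra). nra.
  - eapply Rle_trans. apply FF_sum_aux; auto; lia.
    pose proof (Rpower_pos (INR (S N)) (-(al-1))). pose proof (Rpower_pos (INR (S N)) (-(1/2))).
    apply Rplus_le_compat_l, Rmult_le_compat_l; auto.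
    assert ((1 - Rpower (INR (S N)) (- (al - 1))) / (al - 1) <= 1/(al-1)).
    { unfold Rdiv. apply Rmult_le_compat_r. left; apply Rinv_0_lt_compat; lra. lra. }
    assert ((1 - Rpower (INR (S N)) (- (1/2))) / (1/2) <= 2).
    { replace ((1 - Rpower (INR (S N)) (- (1/2))) / (1/2)) with (2 * (1 - Rpower (INR (S N)) (- (1/2)))) by field. lra. }
    lra.
Qed.

Lemma psd2 Cov x1 x2 y1 y2 : is_covariance Cov -> 0 <= x1 -> 0 <= x2 -> 0 <= y1 -> 0 <= y2 ->
  Rabs (incr_cov Cov x1 x2 y1 y2) <= (incr_cov Cov x1 x2 x1 x2 + incr_cov Cov y1 y2 y1 y2)/2.
Proof.
  intros [Hs Hp] h1 h2 h3 h4.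
  set (ts := fun i => match i with 0%nat => x1 | 1%nat => x2 | 2%nat => y1 | _ => y2 end).
  assert (Hts : forall i, 0 <= ts i) by (intros [|[|[|i]]]; simpl; auto).
  pose proof (Hp 4%nat ts (fun i => match i with 0%nat => 1 | 1%nat => -1 | 2%nat => 1 | 3%nat => -1 | _ => 0 end) Hts) as P1.
  pose proof (Hp 4%nat ts (fun i => match i with 0%nat => 1 | 1%nat => -1 | 2%nat => -1 | 3%nat => 1 | _ => 0 end) Hts) as P2.
  simpl in P1, P2. unfold ts in P1, P2.
  rewrite (Hs x2 x1), (Hs y1 x1), (Hs y2 x1), (Hs y1 x2), (Hs y2 x2), (Hs y2 y1) in P1, P2 by auto.
  unfold incr_cov. rewrite (Hs x2 x1), (Hs y2 y1) by auto. apply Rabs_le. split; lra.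
Qed.

Definition qq (n : nat) : R := exp (- ln (INR n) / 2).

Lemma INRn_pos n : (1 <= n)%nat -> 0 < INR n.
Proof. intros; apply lt_0_INR; lia. Qed.

Lemma var_bound Cov T C1 n a : (1 <= n)%nat ->
  (forall s t, 0 < s -> s <= t -> t <= T -> incr_cov Cov t (t - s) t (t - s) <= C1 * Rpower s (1/2)) ->
  INR (S a) / INR n <= T ->
  incr_cov Cov (INR (S a) / INR n) (INR a / INR n) (INR (S a) / INR n) (INR a / INR n) <= Rabs C1 * qq n.
Proof.
  intros Hn Hi Ha. pose proof (INRn_pos n Hn) as Hnp.
  assert (Hs : 0 < 1 / INR n) by (apply Rdiv_lt_0_compat; lra).
  assert (Hst : 1 / INR n <= INR (S a) / INR n).
  { unfold Rdiv. apply Rmult_le_compat_r. left; apply Rinv_0_lt_compat; lra.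
    rewrite S_INR; pose proof (pos_INR a); lra. }
  pose proof (Hi _ _ Hs Hst Ha) as H.
  replace (INR (S a) / INR n - 1 / INR n) with (INR a / INR n) in H by (rewrite S_INR; field; lra).
  replace (Rpower (1 / INR n) (1/2)) with (qq n) in H.
  2:{ unfold qq, Rpower. rewrite lndiv, ln_1 by lra. f_equal. field. }
  assert (0 < qq n) by (unfold qq; apply exp_pos).
  assert (C1 * qq n <= Rabs C1 * qq n) by (apply Rmult_le_compat_r; [lra | apply Rle_abs]).
  lra.
Qed.

Lemma beta_cs Cov T C1 n a b : is_covariance Cov -> (1 <= n)%nat ->
  (forall s t, 0 < s -> s <= t -> t <= T -> incr_cov Cov t (t - s) t (t - s) <= C1 * Rpower s (1/2)) ->
  INR (S a) / INR n <= T -> INR (S b) / INR n <= T ->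
  Rabs (beta_n Cov n a b) <= Rabs C1 * qq n.
Proof.
  intros Hc Hn Hi Ha Hb. pose proof (INRn_pos n Hn) as Hnp.
  assert (P : forall k, 0 <= INR k / INR n) by (intros; unfold Rdiv; apply Rmult_le_pos; [apply pos_INR | left; apply Rinv_0_lt_compat; lra]).
  unfold beta_n. eapply Rle_trans. apply psd2; auto.
  pose proof (var_bound Cov T C1 n a Hn Hi Ha). pose proof (var_bound Cov T C1 n b Hn Hi Hb). lra.
Qed.

Lemma INR_dist a b : INR (ndist a b) = Rabs (INR a - INR b).
Proof. unfold ndist. destruct (Nat.le_ge_cases a b).
  - replace (a - b)%nat with O by lia. rewrite Nat.add_0_l, minus_INR by lia.
    rewrite Rabs_left1. ring. apply le_INR in H. lra.
  - replace (b - a)%nat with O by lia. rewrite Nat.add_0_r, minus_INR by lia.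
    rewrite Rabs_right. ring. apply le_INR in H. lra.
Qed.

Lemma beta_far Cov T C1 al n a b : (1 <= n)%nat -> 1 < al -> al <= 3/2 ->
  (forall s r t, 0 < s -> 2 * s <= r -> r <= T -> 2 * s <= t -> t <= T ->
      2 * s <= Rabs (t - r) ->
      Rabs (incr_cov Cov t (t - s) r (r - s)) <=
        C1 * s ^ 2 * Rpower (Rabs (t - r)) (- al) * Rpower (Rmin t r - s) (- (3/2 - al))
        + C1 * s ^ 2 * Rpower (Rabs (t - r)) (- (3/2))) ->
  (1 <= a)%nat -> (1 <= b)%nat -> (2 <= ndist a b)%nat ->
  INR (S a) / INR n <= T -> INR (S b) / INR n <= T ->
  Rabs (beta_n Cov n a b) <= Rabs C1 * qq n * phi al (INR (ndist a b)).
Proof.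
  intros Hn Hal1 Hal2 Hii Ha Hb Hd HaT HbT.
  pose proof (INRn_pos n Hn) as Hnp.
  set (s := 1 / INR n).
  assert (Hs : 0 < s) by (apply Rdiv_lt_0_compat; lra).
  assert (Ea : INR (S a) / INR n - s = INR a / INR n) by (unfold s; rewrite S_INR; field; lra).
  assert (Eb : INR (S b) / INR n - s = INR b / INR n) by (unfold s; rewrite S_INR; field; lra).
  assert (Ed : Rabs (INR (S a) / INR n - INR (S b) / INR n) = INR (ndist a b) / INR n).
  { rewrite INR_dist, !S_INR.
    replace ((INR a + 1) / INR n - (INR b + 1) / INR n) with ((INR a - INR b) * / INR n) by (field; lra).
    rewrite Rabs_mult, (Rabs_right (/ INR n)). reflexivity. left; apply Rinv_0_lt_compat; lra. }
  assert (Hle : forall k : nat, (2 <= k)%nat -> 2 * s <= INR k / INR n).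
  { intros k Hk. unfold s. apply le_INR in Hk. simpl in Hk. unfold Rdiv.
    replace (2 * (1 * / INR n)) with (2 * / INR n) by ring.
    apply Rmult_le_compat_r. left; apply Rinv_0_lt_compat; lra. lra. }
  pose proof (Hii s (INR (S b) / INR n) (INR (S a) / INR n) Hs
     (Hle (S b) ltac:(lia)) HbT (Hle (S a) ltac:(lia)) HaT
     ltac:(rewrite Ed; apply Hle; lia)) as H.
  rewrite Ea, Eb, Ed in H. unfold beta_n. eapply Rle_trans. exact H. clear H.
  set (L := ln (INR n)).
  set (d := INR (ndist a b)).
  assert (Hd2 : 2 <= d) by (unfold d; apply le_INR in Hd; simpl in Hd; lra).
  set (m' := Rmin (INR (S a) / INR n) (INR (S b) / INR n) - s).
  assert (Hm : s <= m').
  { unfold m'. pose proof (Hle (S a) ltac:(lia)). pose proof (Hle (S b) ltac:(lia)).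
    unfold Rmin. destruct (Rle_dec _ _); lra. }
  assert (Es2 : s ^ 2 = exp (-2 * L)).
  { replace (-2 * L) with (INR 2 * (- L)) by (simpl; ring). rewrite exp_INR_mul.
    rewrite exp_Ropp. unfold L. rewrite exp_ln by lra. unfold s. f_equal. field. lra. }
  assert (EX : forall c, Rpower (d / INR n) c = exp (c * ln d - c * L)).
  { intros c. unfold Rpower. rewrite lndiv by lra. f_equal. unfold L. ring. }
  assert (HY : Rpower m' (- (3/2 - al)) <= exp ((3/2 - al) * L)).
  { unfold Rpower. apply expm. assert (ln s <= ln m') by (apply lnm; lra).
    assert (ln s = - L) by (unfold s, L; rewrite lndiv, ln_1 by lra; ring).
    assert (0 <= 3/2 - al) by lra. nra. }
  assert (Eq : qq n = exp (- L / 2)) by reflexivity.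
  assert (P1 : s ^ 2 * Rpower (d / INR n) (- al) * Rpower m' (- (3 / 2 - al)) <= qq n * Rpower d (-al)).
  { rewrite Es2, EX, Eq. unfold Rpower in HY |- *.
    apply Rle_trans with (exp (-2 * L) * exp (- al * ln d - - al * L) * exp ((3/2 - al) * L)).
    { apply Rmult_le_compat_l. pose proof (exp_pos (-2*L)); pose proof (exp_pos (- al * ln d - - al * L)); nra. exact HY. }
    right. rewrite <- !exp_plus. f_equal. field. }
  assert (P2 : s ^ 2 * Rpower (d / INR n) (- (3/2)) = qq n * Rpower d (-(3/2))).
  { rewrite Es2, EX, Eq. unfold Rpower in HY |- *. rewrite <- !exp_plus. f_equal. field. }
  assert (Q1 : 0 <= s ^ 2 * Rpower (d / INR n) (- al) * Rpower m' (- (3 / 2 - al))).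
  { pose proof (Rpower_pos (d / INR n) (-al)); pose proof (Rpower_pos m' (- (3 / 2 - al))).
    pose proof (pow2_ge_0 s). apply Rmult_le_pos; [apply Rmult_le_pos|]; lra. }
  assert (Q2 : 0 <= s ^ 2 * Rpower (d / INR n) (- (3/2))).
  { pose proof (Rpower_pos (d / INR n) (-(3/2))). pose proof (pow2_ge_0 s). nra. }
  unfold phi.
  replace (C1 * s ^ 2 * Rpower (d / INR n) (- al) * Rpower m' (- (3 / 2 - al)) + C1 * s ^ 2 * Rpower (d / INR n) (- (3 / 2)))
    with (C1 * (s ^ 2 * Rpower (d / INR n) (- al) * Rpower m' (- (3 / 2 - al)) + s ^ 2 * Rpower (d / INR n) (- (3 / 2)))) by ring.
  apply Rle_trans with (Rabs C1 * (s ^ 2 * Rpower (d / INR n) (- al) * Rpower m' (- (3 / 2 - al)) + s ^ 2 * Rpower (d / INR n) (- (3 / 2)))).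
  { apply Rmult_le_compat_r. lra. apply Rle_abs. }
  replace (Rabs C1 * qq n * (Rpower d (-al) + Rpower d (-(3/2)))) with (Rabs C1 * (qq n * Rpower d (-al) + qq n * Rpower d (-(3/2)))) by ring.
  apply Rmult_le_compat_l. apply Rabs_pos. rewrite P2. lra.
Qed.

Definition EE (B : R) (j : nat) : R := if Nat.eqb j 1 then B else 0.

Lemma EE_sum B m : 0 <= B -> sumR (fun i => EE B (S i)) m <= B.
Proof. intros HB. induction m. simpl; lra. simpl sumR. destruct m. simpl. unfold EE; simpl. lra.
  unfold EE at 2. simpl Nat.eqb. lra. Qed.

Lemma EE_nonneg B j : 0 <= B -> 0 <= EE B j.
Proof. unfold EE; destruct (Nat.eqb j 1); lra. Qed.

Lemma phi_mono al x y : 0 < al -> 0 < y -> y <= x -> phi al x <= phi al y.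
Proof. intros. unfold phi, Rpower.
  assert (ln y <= ln x) by (apply lnm; lra).
  assert (exp (- al * ln x) <= exp (- al * ln y)) by (apply expm; nra).
  assert (exp (- (3/2) * ln x) <= exp (- (3/2) * ln y)) by (apply expm; nra). lra. Qed.

Lemma powr x A Y r : (1 <= r)%nat -> 0 <= x -> x <= A -> x <= Y -> x ^ r <= A ^ (r - 1) * Y.
Proof. intros Hr H0 HA HY. destruct r. lia. simpl. replace (r - 0)%nat with r by lia.
  rewrite Rmult_comm. apply Rmult_le_compat; auto. apply pow_le; auto. apply pow_incr; auto. Qed.

Lemma pair_bound Cov T C1 C2 al n m j k a b : is_covariance Cov -> (1 <= n)%nat ->
  (forall s t, 0 < s -> s <= t -> t <= T -> incr_cov Cov t (t - s) t (t - s) <= C1 * Rpower s (1/2)) ->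
  1 < al -> al <= 3/2 ->
  (forall s r t, 0 < s -> 2 * s <= r -> r <= T -> 2 * s <= t -> t <= T ->
      2 * s <= Rabs (t - r) ->
      Rabs (incr_cov Cov t (t - s) r (r - s)) <=
        C2 * s ^ 2 * Rpower (Rabs (t - r)) (- al) * Rpower (Rmin t r - s) (- (3/2 - al))
        + C2 * s ^ 2 * Rpower (Rabs (t - r)) (- (3/2))) ->
  INR (2 * m) / INR n <= T ->
  (1 <= j <= m)%nat -> (1 <= k <= m)%nat ->
  (2 * j - 2 <= a <= 2 * j - 1)%nat -> (2 * k - 2 <= b <= 2 * k - 1)%nat ->
  Rabs (beta_n Cov n a b) <= qq n * (FF (Rabs C1) (Rabs C2) al (ndist j k) + EE (Rabs C1) j + EE (Rabs C1) k).
Proof.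
  intros Hc Hn Hi Hal1 Hal2 Hii HmT Hj Hk Ha Hb.
  pose proof (INRn_pos n Hn) as Hnp.
  assert (HT : forall x, (x <= 2 * m)%nat -> INR x / INR n <= T).
  { intros x Hx. eapply Rle_trans; [|exact HmT]. unfold Rdiv. apply Rmult_le_compat_r.
    left; apply Rinv_0_lt_compat; lra. apply le_INR; lia. }
  pose proof (beta_cs Cov T C1 n a b Hc Hn Hi (HT (S a) ltac:(lia)) (HT (S b) ltac:(lia))) as Hcs.
  assert (Hq : 0 < qq n) by (unfold qq; apply exp_pos).
  pose proof (Rabs_pos C1). pose proof (Rabs_pos C2).
  pose proof (FF_nonneg (Rabs C1) (Rabs C2) al (ndist j k) ltac:(lra) ltac:(lra)).
  pose proof (EE_nonneg (Rabs C1) j ltac:(lra)). pose proof (EE_nonneg (Rabs C1) k ltac:(lra)).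
  destruct (Nat.eq_dec a 0) as [Ha0|Ha0].
  { assert (j = 1%nat) by lia. eapply Rle_trans; [exact Hcs|]. rewrite Rmult_comm.
    apply Rmult_le_compat_l. lra. subst j. unfold EE at 1. simpl. lra. }
  destruct (Nat.eq_dec b 0) as [Hb0|Hb0].
  { assert (k = 1%nat) by lia. eapply Rle_trans; [exact Hcs|]. rewrite Rmult_comm.
    apply Rmult_le_compat_l. lra. subst k. unfold EE at 2. simpl. lra. }
  destruct (Nat.le_gt_cases (ndist j k) 1) as [Hd|Hd].
  { eapply Rle_trans; [exact Hcs|]. rewrite Rmult_comm.
    apply Rmult_le_compat_l. lra. unfold FF. rewrite (proj2 (Nat.leb_le _ _) Hd). lra. }
  assert (Hdab : (2 <= ndist a b)%nat) by (unfold ndist in *; lia).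
  pose proof (beta_far Cov T C2 al n a b Hn Hal1 Hal2 Hii ltac:(lia) ltac:(lia) Hdab
    (HT (S a) ltac:(lia)) (HT (S b) ltac:(lia))) as Hf.
  assert (phi al (INR (ndist a b)) <= phi al (INR (ndist j k))).
  { apply phi_mono. lra. apply lt_0_INR; lia. apply le_INR. unfold ndist in *; lia. }
  unfold FF. rewrite (proj2 (Nat.leb_gt _ _) Hd).
  assert (Rabs C2 * qq n * phi al (INR (ndist a b)) <= Rabs C2 * qq n * phi al (INR (ndist j k))).
  { apply Rmult_le_compat_l; nra. }
  eapply Rle_trans; [exact Hf|]. eapply Rle_trans; [exact H5|]. replace (Rabs C2 * qq n * phi al (INR (ndist j k))) with (qq n * (Rabs C2 * phi al (INR (ndist j k)))) by ring. apply Rmult_le_compat_l; lra.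
Qed.

Lemma GG B C al m : 0 <= B -> 0 <= C -> 1 < al ->
  sumR (fun i => sumR (fun i' => FF B C al (ndist (S i) (S i')) + EE B (S i) + EE B (S i')) m) m
  <= INR m * (2 * (B + C*(1/(al-1) + 2)) + 3 * B).
Proof.
  intros HB HC Hal.
  rewrite (sumR_ext _ (fun i => sumR (fun i' => FF B C al (ndist i i')) m + INR m * EE B (S i)
     + sumR (fun i' => EE B (S i')) m)).
  2:{ intros i Hi. rewrite !sumR_plus, sumR_const; try reflexivity. }
  rewrite !sumR_plus, sumR_scal, sumR_const.
  pose proof (dsum_dist (FF B C al) (B + C*(1/(al-1) + 2)) m (fun e => FF_nonneg B C al e HB HC)
    (fun N => FF_sum B C al N HB HC Hal)).
  pose proof (EE_sum B m HB). pose proof (pos_INR m).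
  assert (FF B C al 0 = B) by reflexivity.
  assert (INR m * sumR (fun i => EE B (S i)) m <= INR m * B) by (apply Rmult_le_compat_l; lra).
  nra.
Qed.

Lemma nfloor_le x : 0 <= x -> INR (nfloor x) <= x.
Proof.
  intros Hx. unfold nfloor. destruct (base_Int_part x) as [H1 H2].
  destruct (Z_lt_le_dec (Int_part x) 0) as [Hl|Hl].
  - rewrite INR_IZR_INZ, ZifyInst.of_nat_to_nat_eq, Z.max_l by lia. simpl. lra.
  - rewrite INR_IZR_INZ, Z2Nat.id by lia. exact H1.
Qed.

Lemma term_bound Cov T C1 C2 al n m j k a b r : is_covariance Cov -> (1 <= n)%nat -> (1 <= r)%nat ->
  (forall s t, 0 < s -> s <= t -> t <= T -> incr_cov Cov t (t - s) t (t - s) <= C1 * Rpower s (1/2)) ->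
  1 < al -> al <= 3/2 ->
  (forall s r t, 0 < s -> 2 * s <= r -> r <= T -> 2 * s <= t -> t <= T ->
      2 * s <= Rabs (t - r) ->
      Rabs (incr_cov Cov t (t - s) r (r - s)) <=
        C2 * s ^ 2 * Rpower (Rabs (t - r)) (- al) * Rpower (Rmin t r - s) (- (3/2 - al))
        + C2 * s ^ 2 * Rpower (Rabs (t - r)) (- (3/2))) ->
  INR (2 * m) / INR n <= T ->
  (1 <= j <= m)%nat -> (1 <= k <= m)%nat ->
  (2 * j - 2 <= a <= 2 * j - 1)%nat -> (2 * k - 2 <= b <= 2 * k - 1)%nat ->
  Rabs (beta_n Cov n a b) ^ r <= Rabs C1 ^ (r - 1) * qq n ^ r *
     (FF (Rabs C1) (Rabs C2) al (ndist j k) + EE (Rabs C1) j + EE (Rabs C1) k).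
Proof.
  intros Hc Hn Hr Hi Hal1 Hal2 Hii HmT Hj Hk Ha Hb.
  pose proof (INRn_pos n Hn) as Hnp.
  assert (HT : forall x, (x <= 2 * m)%nat -> INR x / INR n <= T).
  { intros x Hx. eapply Rle_trans; [|exact HmT]. unfold Rdiv. apply Rmult_le_compat_r.
    left; apply Rinv_0_lt_compat; lra. apply le_INR; lia. }
  pose proof (beta_cs Cov T C1 n a b Hc Hn Hi (HT (S a) ltac:(lia)) (HT (S b) ltac:(lia))) as Hcs.
  pose proof (pair_bound Cov T C1 C2 al n m j k a b Hc Hn Hi Hal1 Hal2 Hii HmT Hj Hk Ha Hb) as Hp.
  eapply Rle_trans. apply powr; [exact Hr | apply Rabs_pos | exact Hcs | exact Hp].
  right. rewrite Rpow_mult_distr.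
  replace (qq n ^ r) with (qq n ^ (r - 1) * qq n). ring.
  destruct r. lia. simpl. replace (r - 0)%nat with r by lia. ring.
Qed.

Theorem corollary4p2 (Cov : R -> R -> R) (T : R) :
  0 < T ->
  is_covariance Cov -> cov_continuous Cov ->
  cond_i Cov T -> cond_ii Cov T ->
  forall r : nat, (1 <= r)%nat ->
  exists C : R, forall (n : nat) (t : R), (1 <= n)%nat -> 0 <= t -> t <= T ->
    sum1 (fun j => sum1 (fun k =>
        Rabs (beta_n Cov n (2*j-1) (2*k-1)) ^ r
      + Rabs (beta_n Cov n (2*j-1) (2*k-2)) ^ r
      + Rabs (beta_n Cov n (2*j-2) (2*k-1)) ^ r
      + Rabs (beta_n Cov n (2*j-2) (2*k-2)) ^ r)
      (nfloor (INR n * t / 2))) (nfloor (INR n * t / 2))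
    <= C * INR (nfloor (INR n * t / 2)) * Rpower (INR n) (- (INR r) / 2).
Proof.
  intros HT Hc _ [C1 Hi] [C2 [al [Hal1 [Hal2 Hii]]]] r Hr. cbv zeta in Hii.
  set (B := Rabs C1). set (K := B + Rabs C2 * (1/(al-1) + 2)).
  exists (4 * B ^ (r - 1) * (2 * K + 3 * B)).
  intros n t Hn Ht0 HtT.
  pose proof (INRn_pos n Hn) as Hnp.
  set (m := nfloor (INR n * t / 2)).
  assert (HmT : INR (2 * m) / INR n <= T).
  { assert (INR m <= INR n * t / 2) by (apply nfloor_le; apply Rmult_le_pos; [apply Rmult_le_pos|]; lra).
    rewrite mult_INR. simpl INR.
    apply Rle_trans with t; [|exact HtT].
    apply Rmult_le_reg_r with (INR n); auto. unfold Rdiv. rewrite Rmult_assoc, Rinv_l; lra. }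
  assert (Hq : Rpower (INR n) (- INR r / 2) = qq n ^ r).
  { unfold Rpower, qq. rewrite <- exp_INR_mul. f_equal. field. }
  rewrite Hq.
  set (c := B ^ (r - 1) * qq n ^ r).
  assert (Hc0 : 0 <= c).
  { unfold c. apply Rmult_le_pos; apply pow_le. apply Rabs_pos. unfold qq; left; apply exp_pos. }
  unfold sum1.
  apply Rle_trans with (sumR (fun i => sumR (fun i' => 4 * c *
     (FF B (Rabs C2) al (ndist (S i) (S i')) + EE B (S i) + EE B (S i'))) m) m).
  { apply sumR_le. intros i Hi'. apply sumR_le. intros i' Hi''.
    pose (tb := fun a b (Ha : (2 * S i - 2 <= a <= 2 * S i - 1)%nat) (Hb : (2 * S i' - 2 <= b <= 2 * S i' - 1)%nat) =>
      term_bound Cov T C1 C2 al n m (S i) (S i') a b r Hc Hn Hr Hi Hal1 Hal2 Hii HmT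
        ltac:(lia) ltac:(lia) Ha Hb).
    pose proof (tb (2 * S i - 1)%nat (2 * S i' - 1)%nat ltac:(lia) ltac:(lia)) as T1.
    pose proof (tb (2 * S i - 1)%nat (2 * S i' - 2)%nat ltac:(lia) ltac:(lia)) as T2.
    pose proof (tb (2 * S i - 2)%nat (2 * S i' - 1)%nat ltac:(lia) ltac:(lia)) as T3.
    pose proof (tb (2 * S i - 2)%nat (2 * S i' - 2)%nat ltac:(lia) ltac:(lia)) as T4.
    clear tb. fold B c in T1, T2, T3, T4.
    lra. }
  rewrite (sumR_ext _ (fun i => 4 * c * sumR (fun i' =>
     (FF B (Rabs C2) al (ndist (S i) (S i')) + EE B (S i) + EE B (S i'))) m)).
  2:{ intros. apply sumR_scal. }
  rewrite sumR_scal.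
  pose proof (GG B (Rabs C2) al m (Rabs_pos C1) (Rabs_pos C2) Hal1).
  fold K in H.
  unfold c in *.
  replace (4 * B ^ (r - 1) * (2 * K + 3 * B) * INR m * qq n ^ r)
    with (4 * (B ^ (r - 1) * qq n ^ r) * (INR m * (2 * K + 3 * B))) by ring.
  apply Rmult_le_compat_l. lra. exact H.
Qed.
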